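(* Let $(\mathfrak g,\mu,P)$ be a Nijenhuis Lie algebra and $(M,P_M)$ a Nijenhuis representation over it. Then $(\mathrm C^\bullet_{\mathrm{NjO}}(\mathfrak g,M),\delta_{\mathrm{NjO},M})$ is a cochain complex, i.e. $\delta_{\mathrm{NjO},M}\circ\delta_{\mathrm{NjO},M}=0$.
   Context: All vector spaces are over a field $\mathbf k$ of characteristic $0$. A Nijenhuis Lie algebra is a Lie algebra $(\mathfrak g,\mu=[-,-]_\mu)$ with a linear $P:\mathfrak g\to\mathfrak g$ satisfying $[P a,P b]_\mu=P([Pa,b]_\mu+[a,Pb]_\mu-P[a,b]_\mu)$. A Nijenhuis representation is a Lie algebra representation $M$ of $(\mathfrak g,\mu)$ (action $a x$) with linear $P_M:M\to M$ such that $P(a)P_M(x)=P_M(P(a)x+aP_M(x)-P_M(ax))$. For a Lie algebra $(\mathfrak g,\mu)$ and representation $M$, the Chevalley–Eilenberg complex is $\mathrm C^n_{\mathrm{Lie}}(\mathfrak g,M)=\mathrm{Hom}(\wedge^n\mathfrak g,M)$, $n\ge0$, with $\delta_{\mathrm{Lie},M}(f)(a_1,\dots,a_{n+1})=\sum_{i=1}^{n+1}(-1)^{i-1}a_i f(a_1,\dots,\widehat{a_i},\dots,a_{n+1})+\sum_{i<j}(-1)^{i+j}f([a_i,a_j]_\mu,a_1,\dots,\widehat{a_i},\dots,\widehat{a_j},\dots,a_{n+1})$. Put $[a,b]_P:=[Pa,b]_\mu+[a,Pb]_\mu-P[a,b]_\mu$ and let $\mathfrak g$ act on $M$ by $a\rhd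 x:=P(a)x$. Let $\partial:\mathrm{Hom}(\wedge^n\mathfrak g,M)\to\mathrm{Hom}(\wedge^{n+1}\mathfrak g,M)$ be the Chevalley–Eilenberg differential of the bracket $[-,-]_P$ with coefficients in $M$ with action $\rhd$: $\partial(f)(a_1,\dots,a_{n+1})=\sum_{i}(-1)^{i-1}P(a_i)f(a_1,\dots,\widehat{a_i},\dots,a_{n+1})+\sum_{i<j}(-1)^{i+j}f([a_i,a_j]_P,a_1,\dots,\widehat{a_i},\dots,\widehat{a_j},\dots,a_{n+1})$. Define $\mathrm C^n_{\mathrm{NjO}}(\mathfrak g,M):=\mathrm{Hom}(\wedge^n\mathfrak g,M)$ for $n\ge0$ and $\delta_{\mathrm{NjO},M}(f):=-P_M\circ\delta_{\mathrm{Lie},M}(f)+\partial(f)$. *)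

(* Defs.v *)
From HB Require Import structures.
From mathcomp Require Import all_boot all_order all_algebra.
Set Implicit Arguments. Unset Strict Implicit. Unset Printing Implicit Defensive.
Import GRing.Theory.
Local Open Scope ring_scope.

Section Defs.
Variables (K : fieldType) (g M : lmodType K).

Definition bilinear_map (U V W : lmodType K) (b : U -> V -> W) : Prop :=
  (forall (c : K) u1 u2 v, b (c *: u1 + u2) v = c *: b u1 v + b u2 v) /\
  (forall (c : K) u v1 v2, b u (c *: v1 + v2) = c *: b u v1 + b u v2).

Definition is_lie_bracket (br : g -> g -> g) : Prop :=
  [/\ bilinear_map br,
      (forall a, br a a = 0) &
      (forall a b c, br a (br b c) + br b (br c a) + br c (br a b) = 0)].

Definition is_lie_rep (br : g -> g -> g) (act : g -> M -> M) : Prop :=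
  bilinear_map act /\
  (forall a b x, act (br a b) x = act a (act b x) - act b (act a x)).

Definition nij_bracket (P : g -> g) (br : g -> g -> g) (a b : g) : g :=
  br (P a) b + br a (P b) - P (br a b).

Definition is_nijenhuis_op (br : g -> g -> g) (P : g -> g) : Prop :=
  forall a b, br (P a) (P b) = P (nij_bracket P br a b).

Definition is_nijenhuis_rep (P : g -> g) (act : g -> M -> M) (PM : M -> M) : Prop :=
  forall a x, act (P a) (PM x) = PM (act (P a) x + act a (PM x) - PM (act a x)).

Definition upd n (a : 'I_n -> g) (i : 'I_n) (x : g) : 'I_n -> g :=
  fun k => if k == i then x else a k.

Definition multilinear n (f : ('I_n -> g) -> M) : Prop :=
  forall (a : 'I_n -> g) (i : 'I_n) (c : K) (x y : g),
    f (upd a i (c *: x + y)) = c *: f (upd a i x) + f (upd a i y).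

Definition alternating n (f : ('I_n -> g) -> M) : Prop :=
  forall (a : 'I_n -> g) (i j : 'I_n), i != j -> a i = a j -> f a = 0.

Definition skip1 n (a : 'I_n.+1 -> g) (i : 'I_n.+1) : 'I_n -> g :=
  fun k => a (lift i k).

(* index of the k-th (0-based) remaining argument after deleting positions i < j *)
Definition remidx (i j k : nat) : nat :=
  if (k < i)%N then k else if (k.+1 < j)%N then k.+1 else k.+2.

(* the argument list ([a_i,a_j], a_1, .., ^a_i, .., ^a_j, .., a_{n+1}) *)
Definition ce_arg2 n (br : g -> g -> g) (a : 'I_n.+1 -> g) (i j : 'I_n.+1)
  : 'I_n -> g :=
  fun k => if val k == 0%N then br (a i) (a j)
           else a (inord (remidx i j (val k).-1)).

(* Chevalley--Eilenberg differential (indices 0-based; signs agree with the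
   1-based formula) *)
Definition ce_diff (br : g -> g -> g) (act : g -> M -> M) n
  (f : ('I_n -> g) -> M) : ('I_n.+1 -> g) -> M :=
  fun a =>
    \sum_(i < n.+1) (-1) ^+ i *: act (a i) (f (skip1 a i))
  + \sum_(i < n.+1) \sum_(j < n.+1 | (i < j)%N)
        (-1) ^+ (i + j) *: f (ce_arg2 br a i j).

Definition njo_diff (br : g -> g -> g) (act : g -> M -> M) (P : g -> g)
  (PM : M -> M) n (f : ('I_n -> g) -> M) : ('I_n.+1 -> g) -> M :=
  fun a => - PM (ce_diff br act f a)
           + ce_diff (nij_bracket P br) (fun b x => act (P b) x) f a.

End Defs.

(* Main.v *)
Require Import Defs.
From HB Require Import structures.
From mathcomp Require Import all_boot all_order all_algebra.
From Stdlib Require Import FunctionalExtensionality.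
From mathcomp Require Import zify.
Import GRing.Theory.
Local Open Scope ring_scope.

Section ZN.
Variable V : zmodType.
Inductive zex := ZVar of nat | ZZero | ZAdd of zex & zex | ZOpp of zex.
Fixpoint zeval (env : seq V) e := match e with
 | ZVar n => nth 0 env n | ZZero => 0
 | ZAdd a b => zeval env a + zeval env b | ZOpp a => - zeval env a end.
Fixpoint addl (s t : seq int) := match s, t with
 | [::], _ => t | _, [::] => s | x :: s', y :: t' => (x + y) :: addl s' t' end.
Fixpoint zcoef e : seq int := match e with
 | ZVar n => ncons n 0 [:: 1] | ZZero => [::]
 | ZAdd a b => addl (zcoef a) (zcoef b) | ZOpp a => map (fun x => - x) (zcoef a) end.
Fixpoint lin (env : seq V) (cs : seq int) := match cs with
 | [::] => 0 | c :: cs' => (nth 0 env 0) *~ c + lin (behead env) cs' end.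
Definition isZ0 (c : int) := match c with Posz 0 => true | _ => false end.
Lemma lin_addl env s t : lin env (addl s t) = lin env s + lin env t.
Proof.
elim: s env t => [|x s IH] env [|y t] /=; rewrite ?addr0 ?add0r //.
by rewrite IH mulrzDr addrACA.
Qed.
Lemma lin_opp env s : lin env (map (fun x => - x) s) = - lin env s.
Proof. by elim: s env => [|x s IH] env /=; rewrite ?oppr0 // IH mulrNz opprD. Qed.
Lemma lin_var env n : lin env (ncons n 0 [:: 1]) = nth 0 env n.
Proof.
elim: n env => [|n IH] [|x env] /=; rewrite ?mulr0z ?mulr1z ?add0r ?addr0 //.
by rewrite IH; case: n {IH}.
Qed.
Lemma zeval_lin env e : zeval env e = lin env (zcoef e).
Proof.
elim: e => [n||a IHa b IHb|a IHa] /=; first by rewrite lin_var.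
- by [].
- by rewrite lin_addl IHa IHb.
- by rewrite lin_opp IHa.
Qed.
Lemma lin_zero env s : all isZ0 s -> lin env s = 0.
Proof.
elim: s env => [|x s IH] env //= /andP[hx hs].
rewrite IH // addr0; case: x hx => [[|k]|k] //= _; by rewrite mulr0z.
Qed.
Lemma zeval_sound env a b :
  all isZ0 (addl (zcoef a) (map (fun x => - x) (zcoef b))) = true ->
  zeval env a = zeval env b.
Proof.
move=> h; apply/eqP; rewrite -subr_eq0; apply/eqP.
by rewrite !zeval_lin -lin_opp -lin_addl lin_zero.
Qed.
End ZN.

Ltac zfindc x l := match l with
 | ?y :: _ => let _ := constr:(@erefl _ x : x = y) in constr:(0%N)
 | _ :: ?l' => let n := zfindc x l' in constr:(S n) end.
Ltac zfinds x l := match l with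
 | x :: _ => constr:(0%N)
 | _ :: ?l' => let n := zfinds x l' in constr:(S n) end.
Ltac zatomsG find e l := match e with
 | ?a + ?b => let l1 := zatomsG find a l in zatomsG find b l1
 | - ?a => zatomsG find a l
 | GRing.zero => l
 | _ => match constr:(tt) with
        | _ => let n := find e l in l
        | _ => constr:(e :: l) end end.
Ltac zquoteG find e l := match e with
 | ?a + ?b => let qa := zquoteG find a l in let qb := zquoteG find b l in constr:(ZAdd qa qb)
 | - ?a => let qa := zquoteG find a l in constr:(ZOpp qa)
 | GRing.zero => constr:(ZZero)
 | _ => let n := find e l in constr:(ZVar n) end.
Ltac zmodG find := match goal with |- @eq ?T ?lhs ?rhs =>
  let l0 := zatomsG find lhs (@nil T) in let l := zatomsG find rhs l0 in
  let ql := zquoteG find lhs l in let qr := zquoteG find rhs l in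
  change (@zeval _ l ql = @zeval _ l qr); apply: (@zeval_sound _); vm_compute; reflexivity end.
Ltac zmod := first [ zmodG zfinds | zmodG zfindc ].


Section Abs.
Variables (K : fieldType) (g M : lmodType K).
Variables (al : g -> M -> M) (Q : M -> M) (b1 b2 : g -> g -> g).
Hypothesis alD : forall x u v, al x (u + v) = al x u + al x v.
Hypothesis alZ : forall x (c : K) u, al x (c *: u) = c *: al x u.
Hypothesis QD : forall u v, Q (u + v) = Q u + Q v.
Hypothesis QZ : forall (c : K) u, Q (c *: u) = c *: Q u.
Hypothesis Qal : forall x u, Q (al x u) = al x (Q u).
Hypothesis H3 : forall x y u,
  al x (al y u) - al y (al x u) = al (b1 x y) u + Q (al (b2 x y) u).
Hypothesis J11 : forall x y z, b1 y (b1 x z) - b1 x (b1 y z) + b1 (b1 x y) z = 0.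
Hypothesis J22 : forall x y z, b2 y (b2 x z) - b2 x (b2 y z) + b2 (b2 x y) z = 0.
Hypothesis J12 : forall x y z, b2 y (b1 x z) + b1 y (b2 x z) - b2 x (b1 y z)
   - b1 x (b2 y z) + b2 (b1 x y) z + b1 (b2 x y) z = 0.
Hypothesis b1N : forall x y, b1 y x = - b1 x y.
Hypothesis b2N : forall x y, b2 y x = - b2 x y.

Lemma al0 x : al x 0 = 0.
Proof. by apply: (addrI (al x 0)); rewrite -alD !addr0. Qed.
Lemma alN x u : al x (- u) = - al x u.
Proof. by apply/eqP; rewrite -addr_eq0 -alD addNr al0. Qed.
Lemma Q0 : Q 0 = 0.
Proof. by apply: (addrI (Q 0)); rewrite -QD !addr0. Qed.
Lemma QN u : Q (- u) = - Q u.
Proof. by apply/eqP; rewrite -addr_eq0 -QD addNr Q0. Qed.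
Lemma Qsum I r (P : pred I) (F : I -> M) : Q (\sum_(i <- r | P i) F i) = \sum_(i <- r | P i) Q (F i).
Proof. exact: (big_morph Q QD Q0). Qed.
Lemma alsum x I r (P : pred I) (F : I -> M) : al x (\sum_(i <- r | P i) F i) = \sum_(i <- r | P i) al x (F i).
Proof. exact: (big_morph (al x) (alD x) (al0 x)). Qed.

Definition ins x (F : seq g -> M) : seq g -> M := fun t => F (x :: t).
Definition S x (F : seq g -> M) t :=
  \sum_(0 <= j < size t) (F (set_nth 0 t j (b1 x (nth 0 t j)))
                          + Q (F (set_nth 0 t j (b2 x (nth 0 t j))))).
Definition L x F t := al x (F t) - S x F t.
Fixpoint D (F : seq g -> M) (s : seq g) {struct s} : M :=
  match s with [::] => 0 | x :: t => L x F t - D (ins x F) t end.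

Section Hom.
Variable h : M -> M.
Hypothesis hD : forall u v, h (u + v) = h u + h v.
Hypothesis hQ : forall u, h (Q u) = Q (h u).
Lemma h0 : h 0 = 0.
Proof. by apply: (addrI (h 0)); rewrite -hD !addr0. Qed.
Lemma hsum I r (P : pred I) (F : I -> M) : h (\sum_(i <- r | P i) F i) = \sum_(i <- r | P i) h (F i).
Proof. exact: (big_morph h hD h0). Qed.
Lemma S_h x F t : S x (fun u => h (F u)) t = h (S x F t).
Proof. by rewrite /S hsum; apply: eq_bigr => j _; rewrite hD hQ. Qed.
Hypothesis hal : forall x u, h (al x u) = al x (h u).
Hypothesis hN : forall u, h (- u) = - h u.
Lemma L_h x F t : L x (fun u => h (F u)) t = h (L x F t).
Proof. by rewrite /L S_h hD hN hal. Qed.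
Lemma D_h F s : D (fun u => h (F u)) s = h (D F s).
Proof.
elim: s F => [|x t IH] F /=; first by rewrite h0.
by rewrite L_h (IH (ins x F)) hD hN.
Qed.
End Hom.

Lemma S_add x F G t : S x (fun u => F u + G u) t = S x F t + S x G t.
Proof. by rewrite /S -big_split; apply: eq_bigr => j _ /=; rewrite QD; zmod. Qed.
Lemma L_add x F G t : L x (fun u => F u + G u) t = L x F t + L x G t.
Proof. by rewrite /L S_add alD; zmod. Qed.
Lemma S_opp x F t : S x (fun u => - F u) t = - S x F t.
Proof. by apply: S_h => [u v|u]; rewrite ?opprD ?QN. Qed.
Lemma L_opp x F t : L x (fun u => - F u) t = - L x F t.
Proof. by apply: L_h => [u v|u|y u|u]; rewrite ?opprD ?QN ?alN. Qed.
Lemma S_Q x F t : S x (fun u => Q (F u)) t = Q (S x F t).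
Proof. by apply: S_h. Qed.
Lemma L_Q x F t : L x (fun u => Q (F u)) t = Q (L x F t).
Proof. by apply: L_h => //; apply: QN. Qed.
Lemma S_al x y F t : S x (fun u => al y (F u)) t = al y (S x F t).
Proof. by apply: S_h => // u; rewrite Qal. Qed.
Lemma D_add F G s : D (fun u => F u + G u) s = D F s + D G s.
Proof.
elim: s F G => [|x t IH] F G /=; first by rewrite addr0.
by rewrite L_add (IH (ins x F) (ins x G)); zmod.
Qed.
Lemma D_opp F s : D (fun u => - F u) s = - D F s.
Proof. by apply: D_h => [u v|u|y u|u]; rewrite ?opprD ?QN ?alN. Qed.
Lemma D_Q F s : D (fun u => Q (F u)) s = Q (D F s).
Proof. by apply: D_h => //; apply: QN. Qed.

Lemma iL x y H t : ins y (L x H) t =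
  L x (ins y H) t - (H (b1 x y :: t) + Q (H (b2 x y :: t))).
Proof.
rewrite /ins /L /S /= big_nat_recl //=.
rewrite (eq_big_nat _ _ (F2 := fun j => ins y H (set_nth 0 t j (b1 x (nth 0 t j))) + Q (ins y H (set_nth 0 t j (b2 x (nth 0 t j)))))) //.
zmod.
Qed.

Definition addF (F : seq g -> M) := forall t j u v, (j < size t)%N ->
  F (set_nth 0 t j (u + v)) = F (set_nth 0 t j u) + F (set_nth 0 t j v).

Section AddF.
Variable F : seq g -> M.
Hypothesis hF : addF F.
Lemma F0 t j : (j < size t)%N -> F (set_nth 0 t j 0) = 0.
Proof. by move=> hj; apply: (addrI (F (set_nth 0 t j 0))); rewrite -hF // !addr0. Qed.
Lemma FN t j u : (j < size t)%N -> F (set_nth 0 t j (- u)) = - F (set_nth 0 t j u).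
Proof. by move=> hj; apply/eqP; rewrite -addr_eq0 -hF // addNr F0. Qed.

Lemma nth_set_same (t : seq g) j w : nth 0 (set_nth 0 t j w) j = w.
Proof. by rewrite nth_set_nth /= eqxx. Qed.
Lemma nth_set_other (t : seq g) j k w : k != j -> nth 0 (set_nth 0 t j w) k = nth 0 t k.
Proof. by move=> h; rewrite nth_set_nth /= (negbTE h). Qed.
Lemma set_set_same (t : seq g) j w v : set_nth 0 (set_nth 0 t j w) j v = set_nth 0 t j v.
Proof. by rewrite set_set_nth eqxx. Qed.
Lemma set_set_other (t : seq g) j k w v : k != j ->
  set_nth 0 (set_nth 0 t j w) k v = set_nth 0 (set_nth 0 t k v) j w.
Proof. by move=> h; rewrite set_set_nth eq_sym (negbTE h). Qed.

Lemma S_at y t j w : (j < size t)%N ->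
  S y F (set_nth 0 t j w) =
  (F (set_nth 0 t j (b1 y w)) + Q (F (set_nth 0 t j (b2 y w)))) +
  \sum_(0 <= k < size t | k != j)
     (F (set_nth 0 (set_nth 0 t k (b1 y (nth 0 t k))) j w) +
      Q (F (set_nth 0 (set_nth 0 t k (b2 y (nth 0 t k))) j w))).
Proof.
move=> hj; rewrite /S size_set_nth (maxn_idPr hj).
rewrite (bigD1_seq j) ?mem_index_iota ?iota_uniq //.
rewrite nth_set_same (set_set_same t j w (b1 y w)) (set_set_same t j w (b2 y w)).
apply: congr1; apply: eq_bigr => k hk.
rewrite (nth_set_other t j k w hk).
by rewrite (set_set_other t j k w (b1 y (nth 0 t k)) hk) (set_set_other t j k w (b2 y (nth 0 t k)) hk).
Qed.

Definition Off x y t j k :=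
  F (set_nth 0 (set_nth 0 t k (b1 y (nth 0 t k))) j (b1 x (nth 0 t j))) +
  Q (F (set_nth 0 (set_nth 0 t k (b2 y (nth 0 t k))) j (b1 x (nth 0 t j)))) +
  Q (F (set_nth 0 (set_nth 0 t k (b1 y (nth 0 t k))) j (b2 x (nth 0 t j))) +
     Q (F (set_nth 0 (set_nth 0 t k (b2 y (nth 0 t k))) j (b2 x (nth 0 t j))))).
Definition Dg x y t j :=
  (F (set_nth 0 t j (b1 y (b1 x (nth 0 t j)))) + Q (F (set_nth 0 t j (b2 y (b1 x (nth 0 t j)))))) +
  Q (F (set_nth 0 t j (b1 y (b2 x (nth 0 t j)))) + Q (F (set_nth 0 t j (b2 y (b2 x (nth 0 t j)))))).

Lemma SSexp x y t : S x (S y F) t =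
  \sum_(0 <= j < size t) Dg x y t j +
  \sum_(0 <= j < size t) \sum_(0 <= k < size t | k != j) Off x y t j k.
Proof.
rewrite {1}/S -big_split; apply: eq_big_nat => j /andP[_ hj].
rewrite !S_at // QD Qsum /Off /Dg [in RHS]big_split /=.
by rewrite addrACA.
Qed.

Lemma Off_sym x y t j k : k != j -> Off x y t j k = Off y x t k j.
Proof.
move=> h; rewrite /Off.
rewrite (set_set_other t j k (b1 x (nth 0 t j)) (b1 y (nth 0 t k)) h).
rewrite (set_set_other t j k (b2 x (nth 0 t j)) (b1 y (nth 0 t k)) h).
rewrite (set_set_other t j k (b1 x (nth 0 t j)) (b2 y (nth 0 t k)) h).
rewrite (set_set_other t j k (b2 x (nth 0 t j)) (b2 y (nth 0 t k)) h).
rewrite !QD; zmod.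
Qed.

Lemma Off_swap x y t :
  \sum_(0 <= j < size t) \sum_(0 <= k < size t | k != j) Off x y t j k =
  \sum_(0 <= j < size t) \sum_(0 <= k < size t | k != j) Off y x t j k.
Proof.
transitivity (\sum_(0 <= j < size t) \sum_(0 <= k < size t)
                 (if k != j then Off x y t j k else 0)).
  by apply: eq_bigr => j _; rewrite big_mkcond.
rewrite exchange_big_nat; apply: eq_bigr => j _; rewrite [in RHS]big_mkcond.
apply: eq_bigr => k _; rewrite [j == k]eq_sym; case: ifP => // h.
by rewrite Off_sym // eq_sym h.
Qed.

Lemma zcomb3 (V : zmodType) (a b c l : V) : a = 0 -> b = 0 -> c = 0 -> l = a + b + c -> l = 0.
Proof. by move=> -> -> -> ->; rewrite !addr0. Qed.

Lemma SS x y t : S x (S y F) t - S y (S x F) t = - S (b1 x y) F t - Q (S (b2 x y) F t).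
Proof.
rewrite !SSexp Off_swap.
suff : \sum_(0 <= j < size t) Dg x y t j - \sum_(0 <= j < size t) Dg y x t j
     + S (b1 x y) F t + Q (S (b2 x y) F t) = 0.
  move=> h; apply/eqP; rewrite -subr_eq0; apply/eqP; apply: (eq_trans _ h); zmod.
rewrite /S Qsum -sumrB -!big_split; apply: big1_seq => j /andP[_].
rewrite mem_index_iota => /andP[_ hj] /=.
set z := nth 0 t j.
have e11 : F (set_nth 0 t j (b1 y (b1 x z))) - F (set_nth 0 t j (b1 x (b1 y z)))
   + F (set_nth 0 t j (b1 (b1 x y) z)) = 0.
  by rewrite -(FN t j _ hj) -!hF // J11 F0.
have e22 : F (set_nth 0 t j (b2 y (b2 x z))) - F (set_nth 0 t j (b2 x (b2 y z)))
   + F (set_nth 0 t j (b2 (b2 x y) z)) = 0.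
  by rewrite -(FN t j _ hj) -!hF // J22 F0.
have e12 : F (set_nth 0 t j (b2 y (b1 x z))) + F (set_nth 0 t j (b1 y (b2 x z)))
   - F (set_nth 0 t j (b2 x (b1 y z))) - F (set_nth 0 t j (b1 x (b2 y z)))
   + F (set_nth 0 t j (b2 (b1 x y) z)) + F (set_nth 0 t j (b1 (b2 x y) z)) = 0.
  by rewrite -!(FN t j _ hj) -!hF // J12 F0.
have q12 := congr1 Q e12; rewrite !QD !QN Q0 in q12.
have q22 := congr1 (fun u => Q (Q u)) e22; rewrite /= !QD !QN Q0 Q0 in q22.
refine (@zcomb3 M _ _ _ _ e11 q12 q22 _).
rewrite /Dg -/z !QD; zmod.
Qed.
End AddF.

Lemma zcomb2e (V : zmodType) (a1 c1 a2 c2 l r : V) : a1 = c1 -> a2 = c2 ->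
  l - r = (a1 - c1) + (a2 - c2) -> l = r.
Proof. by move=> -> -> /eqP; rewrite !subrr addr0 subr_eq0 => /eqP. Qed.

Lemma LL F x y t : addF F ->
  L x (L y F) t - L y (L x F) t = L (b1 x y) F t + Q (L (b2 x y) F t).
Proof.
move=> hF; rewrite /L !S_add !S_opp !S_al !alD !alN QD QN.
refine (@zcomb2e M _ _ _ _ _ _ (H3 x y (F t)) (SS F hF x y t) _); zmod.
Qed.

Lemma LD F x s : addF F -> L x (D F) s = D (L x F) s.
Proof.
elim: s F x => [|y t IH] F x hF.
  by rewrite /L /S /= big_geq // al0 subr0.
have hFy : addF (ins y F) by move=> u j a b hj; exact: (hF (y :: u) j.+1).
have e1 : L x (D F) (y :: t) = ins y (L x (D F)) t by [].
rewrite e1 iL.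
have e2 : ins y (D F) = fun u => L y F u - D (ins y F) u by [].
rewrite e2 L_add L_opp IH //=.
have e3 : ins y (L x F) = fun u => L x (ins y F) u + - (F (b1 x y :: u) + Q (F (b2 x y :: u))).
  by apply: functional_extensionality => u; rewrite iL.
rewrite e3 D_add D_opp D_add D_Q.
have h := LL F x y t hF.
have ee : forall a b : M, a = b -> a - b = 0 by move=> a b ->; rewrite subrr.
refine (@zcomb2e M _ _ _ _ _ _ h (erefl (0:M)) _); rewrite /ins QD QN; zmod.
Qed.

Lemma D2 F s : addF F -> D (D F) s = 0.
Proof.
elim: s F => [|y t IH] F hF //=.
have hFy : addF (ins y F) by move=> u j a b hj; exact: (hF (y :: u) j.+1).
rewrite LD //.
have e2 : ins y (D F) = fun u => L y F u + - D (ins y F) u by [].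
by rewrite e2 D_add D_opp IH // oppr0 addr0 subrr.
Qed.

Definition AS (F : seq g -> M) := forall r u v w,
  F (r ++ u :: v :: w) = - F (r ++ v :: u :: w).

Lemma set_nth_cat (r l : seq g) j z : set_nth 0 (r ++ l) j z =
  if (j < size r)%N then set_nth 0 r j z ++ l else r ++ set_nth 0 l (j - size r) z.
Proof.
elim: r j => [|a r IH] j /=; first by rewrite subn0.
case: j => [|j] //=.
by rewrite IH ltnS subSS; case: ifP.
Qed.

Lemma split2 (T : nat -> M) p n : (p.+1 < n)%N ->
  \sum_(0 <= j < n) T j = T p + T p.+1 +
  \sum_(0 <= j < n) (if (j != p) && (j != p.+1) then T j else 0).
Proof.
move=> hp.
rewrite (bigD1_seq p) ?mem_index_iota ?iota_uniq //=; last by rewrite ltnW.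
rewrite big_mkcond (bigD1_seq p.+1) ?mem_index_iota ?iota_uniq //=.
rewrite (gtn_eqF (ltnSn p)) /= addrA; congr (_ + _).
rewrite big_mkcond; apply: eq_bigr => j _.
by case: (j == p.+1); case: (j == p).
Qed.

Lemma AS_L F x : AS F -> AS (L x F).
Proof.
move=> hF r u v w; rewrite /L hF alN.
suff -> : S x F (r ++ u :: v :: w) = - S x F (r ++ v :: u :: w) by zmod.
pose T s j := F (set_nth 0 s j (b1 x (nth 0 s j))) + Q (F (set_nth 0 s j (b2 x (nth 0 s j)))).
have sz : forall a b : g, size (r ++ a :: b :: w) = (size r + (size w).+2)%N.
  by move=> a b; rewrite size_cat.
rewrite /S !sz.
have hp : ((size r).+1 < size r + (size w).+2)%N by rewrite addnS ltnS addnS ltnS leq_addr.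
rewrite (split2 (T (r ++ u :: v :: w)) _ _ hp) (split2 (T (r ++ v :: u :: w)) _ _ hp).
have t1 : T (r ++ u :: v :: w) (size r) = - T (r ++ v :: u :: w) (size r).+1.
  rewrite /T !set_nth_cat !nth_cat ltnn ltnNge leqnSn /= subnn subSn // subnn /=.
  by rewrite (hF r (b1 x u) v w) (hF r (b2 x u) v w) QN opprD.
have t2 : T (r ++ u :: v :: w) (size r).+1 = - T (r ++ v :: u :: w) (size r).
  rewrite /T !set_nth_cat !nth_cat ltnn ltnNge leqnSn /= subnn subSn // subnn /=.
  by rewrite (hF r u (b1 x v) w) (hF r u (b2 x v) w) QN opprD.
have t3 : \sum_(0 <= j < size r + (size w).+2)
     (if (j != size r) && (j != (size r).+1) then T (r ++ u :: v :: w) j else 0) =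
  - \sum_(0 <= j < size r + (size w).+2)
     (if (j != size r) && (j != (size r).+1) then T (r ++ v :: u :: w) j else 0).
  rewrite -sumrN; apply: eq_big_nat => j /andP[_ hj].
  case: ifP => [/andP[h1 h2]|_]; last by rewrite oppr0.
  rewrite /T !set_nth_cat !nth_cat.
  case: (ltnP j (size r)) => hjr.
    by rewrite (hF (set_nth 0 r j _) u v w) (hF (set_nth 0 r j _) u v w) QN opprD.
  have e : (j - size r = (j - size r - 2).+2)%N.
    move: h1 h2 hjr => /eqP h1 /eqP h2 hjr; lia.
  rewrite e /=.
  by rewrite (hF r u v (set_nth 0 w _ _)) (hF r u v (set_nth 0 w _ _)) QN opprD.
rewrite t1 t2 t3; zmod.
Qed.

Lemma AS_ins F x : AS F -> AS (ins x F).
Proof. by move=> hF r u v w; rewrite /ins -!cat_cons hF. Qed.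
Lemma addF_ins F x : addF F -> addF (ins x F).
Proof. by move=> hF u j a b hj; exact: (hF (x :: u) j.+1). Qed.

Lemma AS_D F : AS F -> addF F -> AS (D F).
Proof.
move=> hA hF r; elim: r F hA hF => [|x r IH] F hA hF u v w /=.
  have -> : L u F (v :: w) = ins v (L u F) w by [].
  have -> : L v F (u :: w) = ins u (L v F) w by [].
  rewrite (iL u v F w) (iL v u F w).
  have e : ins v (ins u F) = fun t => - ins u (ins v F) t.
    by apply: functional_extensionality => t; rewrite /ins (hA [::]).
  rewrite e D_opp.
  have fn : forall a, F (- a :: w) = - F (a :: w).
    by move=> a; exact: (FN F hF (a :: w) 0 a isT).
  rewrite (b1N u v) (b2N u v) !fn QN; zmod.
rewrite (AS_L F x hA) (IH (ins x F) (AS_ins F x hA) (addF_ins F x hF)); zmod.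
Qed.

Definition remi i (s : seq g) := take i s ++ drop i.+1 s.

Lemma remi0 x s : remi 0 (x :: s) = s.
Proof. by rewrite /remi /= drop0. Qed.
Lemma remiS i x s : remi i.+1 (x :: s) = x :: remi i s.
Proof. by []. Qed.

Lemma move_front F : AS F -> forall j t w r, (j < size t)%N ->
  F (r ++ set_nth 0 t j w) = (-1) ^+ j *: F (r ++ w :: remi j t).
Proof.
move=> hA; elim=> [|j IH] [|t0 t] w r hj; rewrite ?ltn0 // in hj.
  by rewrite expr0 scale1r remi0.
rewrite /= -cat_rcons IH // cat_rcons hA exprS mulN1r scaleNr scalerN.
by [].
Qed.

Definition E (F : seq g -> M) (s : seq g) :=
  \sum_(0 <= i < size s) (-1) ^+ i *: al (nth 0 s i) (F (remi i s)) +
  \sum_(0 <= i < size s) \sum_(0 <= j < size s | (i < j)%N)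
     (-1) ^+ (i + j) *: (F (b1 (nth 0 s i) (nth 0 s j) :: remi i (remi j s)) +
                         Q (F (b2 (nth 0 s i) (nth 0 s j) :: remi i (remi j s)))).

Lemma E_cons F x t : E F (x :: t) =
  al x (F t)
  - \sum_(0 <= i < size t) (-1) ^+ i *: al (nth 0 t i) (F (x :: remi i t))
  - \sum_(0 <= j < size t) (-1) ^+ j *:
       (F (b1 x (nth 0 t j) :: remi j t) + Q (F (b2 x (nth 0 t j) :: remi j t)))
  + \sum_(0 <= i < size t) \sum_(0 <= j < size t | (i < j)%N)
     (-1) ^+ (i + j) *: (F (b1 (nth 0 t i) (nth 0 t j) :: x :: remi i (remi j t)) +
                         Q (F (b2 (nth 0 t i) (nth 0 t j) :: x :: remi i (remi j t)))).
Proof.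
rewrite /E /= big_nat_recl // big_nat_recl //.
have e1 : \sum_(0 <= i < size t) (-1) ^+ i.+1 *: al (nth 0 (x :: t) i.+1) (F (remi i.+1 (x :: t)))
   = - \sum_(0 <= i < size t) (-1) ^+ i *: al (nth 0 t i) (F (x :: remi i t)).
  by rewrite -sumrN; apply: eq_bigr => i _; rewrite exprS mulN1r scaleNr.
have e2 : \sum_(0 <= j < (size t).+1 | (0 < j)%N) (-1) ^+ (0 + j) *:
     (F (b1 (nth 0 (x :: t) 0) (nth 0 (x :: t) j) :: remi 0 (remi j (x :: t))) +
      Q (F (b2 (nth 0 (x :: t) 0) (nth 0 (x :: t) j) :: remi 0 (remi j (x :: t)))))
   = - \sum_(0 <= j < size t) (-1) ^+ j *:
       (F (b1 x (nth 0 t j) :: remi j t) + Q (F (b2 x (nth 0 t j) :: remi j t))).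
  rewrite big_mkcond big_nat_recl //= add0r -sumrN; apply: eq_bigr => j _.
  by rewrite exprS mulN1r scaleNr remiS remi0.
have e3 : forall i, \sum_(0 <= j < (size t).+1 | (i.+1 < j)%N) (-1) ^+ (i.+1 + j) *:
     (F (b1 (nth 0 (x :: t) i.+1) (nth 0 (x :: t) j) :: remi i.+1 (remi j (x :: t))) +
      Q (F (b2 (nth 0 (x :: t) i.+1) (nth 0 (x :: t) j) :: remi i.+1 (remi j (x :: t)))))
   = \sum_(0 <= j < size t | (i < j)%N) (-1) ^+ (i + j) *:
     (F (b1 (nth 0 t i) (nth 0 t j) :: x :: remi i (remi j t)) +
      Q (F (b2 (nth 0 t i) (nth 0 t j) :: x :: remi i (remi j t)))).
  move=> i; rewrite big_mkcond big_nat_recl //= add0r [RHS]big_mkcond.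
  apply: eq_bigr => j _; rewrite ltnS; case: ifP => // _.
  by rewrite addSn addnS !exprS !mulN1r opprK.
rewrite e1 e2 (eq_bigr _ (fun i _ => e3 i)).
rewrite /= expr0 scale1r remi0; zmod.
Qed.

Lemma E_D s : forall F, AS F -> E F s = D F s.
Proof.
elim: s => [|x t IH] F hA.
  by rewrite /E /= !big_geq // addr0.
rewrite E_cons /= -(IH (ins x F) (AS_ins F x hA)) /L.
have mf : forall j z, (j < size t)%N ->
    F (set_nth 0 t j z) = (-1) ^+ j *: F (z :: remi j t).
  by move=> j z hj; exact: (move_front F hA j t z [::] hj).
have asn : forall a b R, F (a :: b :: R) = - F (b :: a :: R).
  by move=> a b R; exact: (hA [::] a b R).
have eS : S x F t = \sum_(0 <= j < size t) (-1) ^+ j *: (F (b1 x (nth 0 t j) :: remi j t)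
     + Q (F (b2 x (nth 0 t j) :: remi j t))).
  by apply: eq_big_nat => j /andP[_ hj]; rewrite !mf // QZ scalerDr.
rewrite eS.
have eE : E (ins x F) t =
  \sum_(0 <= i < size t) (-1) ^+ i *: al (nth 0 t i) (F (x :: remi i t)) -
  \sum_(0 <= i < size t) \sum_(0 <= j < size t | (i < j)%N)
     (-1) ^+ (i + j) *: (F (b1 (nth 0 t i) (nth 0 t j) :: x :: remi i (remi j t)) +
                         Q (F (b2 (nth 0 t i) (nth 0 t j) :: x :: remi i (remi j t)))).
  rewrite /E /ins /=; congr (_ + _); rewrite -sumrN; apply: eq_bigr => i _.
  rewrite -sumrN; apply: eq_bigr => j _.
  by rewrite (asn x) (asn x) QN -opprD scalerN.
rewrite eE; zmod.
Qed.

Theorem EE0 F s : AS F -> addF F -> E (E F) s = 0.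
Proof.
move=> hA hF.
have e : E F = D F by apply: functional_extensionality => t; exact: E_D.
rewrite e E_D ?D2 //; exact: AS_D.
Qed.

Lemma size_remi i (s : seq g) : (i < size s)%N -> size (remi i s) = (size s).-1.
Proof. by move=> h; rewrite /remi size_cat size_take h size_drop; lia. Qed.

Lemma E_vanish F s : (forall u, (size u).+1 = size s -> F u = 0) -> E F s = 0.
Proof.
move=> hv; rewrite /E big1_seq ?add0r.
  apply: big1_seq => i /andP[_]; rewrite mem_index_iota => /andP[_ hi].
  apply: big1_seq => j /andP[hij]; rewrite mem_index_iota => /andP[_ hj].
  rewrite !hv /= ?Q0 ?addr0 ?scaler0 // size_remi ?size_remi //; try lia.
by move=> i /andP[_]; rewrite mem_index_iota => /andP[_ hi]; rewrite hv ?al0 ?scaler0 // size_remi //; lia.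
Qed.
End Abs.


Arguments remi {K g}.
Arguments E {K g M}.
Arguments size_remi {K g}.
Arguments addF {K g M}.
Arguments AS {K g M}.

Lemma nth_remi (K : fieldType) (g : lmodType K) i (s : seq g) k : (i < size s)%N ->
  nth 0 (remi i s) k = nth 0 s (bump i k).
Proof.
move=> h; rewrite /remi nth_cat size_take h /bump.
case: (ltnP k i) => hk.
  by rewrite nth_take // add0n.
rewrite nth_drop add1n; congr nth; lia.
Qed.

Lemma remidx_bump i j k : (i < j)%N -> remidx i j k = bump j (bump i k).
Proof.
move=> hij; rewrite /remidx /bump.
case: (leqP i k) => h1.
  by case: (leqP j k.+1) => h2.
have h2 : (j <= k)%N = false by apply/negbTE; rewrite -ltnNge; exact: ltn_trans h1 hij.
by rewrite /= h2.
Qed.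

Lemma bump_lt i k n : (k < n)%N -> (bump i k < n.+1)%N.
Proof. by rewrite /bump; case: (i <= k)%N => /= h; lia. Qed.

Section Upd.
Variables (K : fieldType) (g M : lmodType K) (n : nat) (f : ('I_n -> g) -> M).
Hypotheses (hml : multilinear f) (halt : alternating f).

Lemma upd_same (a : 'I_n -> g) i x : upd a i x i = x.
Proof. by rewrite /upd /= eqxx. Qed.
Lemma upd_other (a : 'I_n -> g) i x k : k != i -> upd a i x k = a k.
Proof. by move=> h; rewrite /upd /= (negbTE h). Qed.
Lemma upd_comm (a : 'I_n -> g) i j x y : i != j ->
  upd (upd a i x) j y = upd (upd a j y) i x.
Proof.
move=> hij; apply: functional_extensionality => k; rewrite /upd /=.
case: (k =P j) => [hkj|hkj]; case: (k =P i) => [hki|hki] //.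
by move: hij; rewrite -hki -hkj eqxx.
Qed.
Lemma fD (a : 'I_n -> g) i x y : f (upd a i (x + y)) = f (upd a i x) + f (upd a i y).
Proof. by have := hml a i 1 x y; rewrite !scale1r. Qed.

Lemma f_swap (a : 'I_n -> g) i j x y : i != j ->
  f (upd (upd a i x) j y) = - f (upd (upd a i y) j x).
Proof.
move=> hij.
have h0 : f (upd (upd a i (x + y)) j (x + y)) = 0.
  by apply: (halt _ _ _ hij); rewrite upd_same upd_other ?upd_same.
have hji : j != i by rewrite eq_sym.
rewrite fD !(upd_comm _ _ _ _ _ hij) !fD in h0.
have z1 : f (upd (upd a j x) i x) = 0.
  by apply: (halt _ _ _ hij); rewrite upd_same upd_other ?upd_same.
have z2 : f (upd (upd a j y) i y) = 0.
  by apply: (halt _ _ _ hij); rewrite upd_same upd_other ?upd_same.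
rewrite z1 z2 add0r addr0 in h0.
rewrite !(upd_comm _ _ _ _ _ hij).
by apply/eqP; rewrite -addr_eq0 addrC h0.
Qed.
End Upd.
Arguments fD {K g M n f}.
Arguments f_swap {K g M n f}.

Section Bil.
Variables (K : fieldType) (U V W : lmodType K) (b : U -> V -> W).
Hypothesis hb : bilinear_map b.
Lemma bDl u1 u2 v : b (u1 + u2) v = b u1 v + b u2 v.
Proof. by have := hb.1 1 u1 u2 v; rewrite !scale1r. Qed.
Lemma bDr u v1 v2 : b u (v1 + v2) = b u v1 + b u v2.
Proof. by have := hb.2 1 u v1 v2; rewrite !scale1r. Qed.
Lemma b0l v : b 0 v = 0.
Proof. by apply: (addrI (b 0 v)); rewrite -bDl !addr0. Qed.
Lemma b0r u : b u 0 = 0.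
Proof. by apply: (addrI (b u 0)); rewrite -bDr !addr0. Qed.
Lemma bNl u v : b (- u) v = - b u v.
Proof. by apply/eqP; rewrite -addr_eq0 -bDl addNr b0l. Qed.
Lemma bNr u v : b u (- v) = - b u v.
Proof. by apply/eqP; rewrite -addr_eq0 -bDr addNr b0r. Qed.
Lemma bZr c u v : b u (c *: v) = c *: b u v.
Proof. by have := hb.2 c u v 0; rewrite !addr0 b0r addr0. Qed.
End Bil.
Arguments bDl {K U V W b}.
Arguments bDr {K U V W b}.
Arguments b0l {K U V W b}.
Arguments b0r {K U V W b}.
Arguments bNl {K U V W b}.
Arguments bNr {K U V W b}.
Arguments bZr {K U V W b}.

Section Inst.
Variables (K : fieldType) (g M : lmodType K) (br : g -> g -> g) (act : g -> M -> M)
  (P : {linear g -> g}) (PM : {linear M -> M}).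
Hypotheses (hbr : is_lie_bracket br) (hact : is_lie_rep br act)
  (hP : is_nijenhuis_op br P) (hPM : is_nijenhuis_rep P act PM).

Let bb : bilinear_map br. Proof. by case: hbr. Qed.
Let ba : bilinear_map act. Proof. by case: hact. Qed.
Let rep : forall a b x, act (br a b) x = act a (act b x) - act b (act a x).
Proof. by case: hact. Qed.
Let alt : forall a, br a a = 0. Proof. by case: hbr. Qed.
Let jac : forall a b c, br a (br b c) + br b (br c a) + br c (br a b) = 0.
Proof. by case: hbr. Qed.

Lemma PMD a b : PM (a + b) = PM a + PM b. Proof. exact: linearD. Qed.
Lemma PMN a : PM (- a) = - PM a. Proof. exact: linearN. Qed.
Lemma PMZ c a : PM (c *: a) = c *: PM a. Proof. exact: linearZ. Qed.
Lemma PD a b : P (a + b) = P a + P b. Proof. exact: linearD. Qed.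
Lemma PN a : P (- a) = - P a. Proof. exact: linearN. Qed.

Lemma brN x y : br y x = - br x y.
Proof.
have := alt (x + y); rewrite (bDl bb) !(bDr bb) !alt add0r addr0 => /eqP.
by rewrite addrC addr_eq0 => /eqP.
Qed.

Definition alI (b : g) (x : M) := act (P b) x - PM (act b x).
Definition QI (x : M) := - PM x.
Definition nij := nij_bracket P br.

Lemma alID x u v : alI x (u + v) = alI x u + alI x v.
Proof. by rewrite /alI !(bDr ba) PMD; zmod. Qed.
Lemma alIZ x c u : alI x (c *: u) = c *: alI x u.
Proof. by rewrite /alI !(bZr ba) PMZ scalerBr. Qed.
Lemma QID u v : QI (u + v) = QI u + QI v.
Proof. by rewrite /QI PMD opprD. Qed.
Lemma QIZ c u : QI (c *: u) = c *: QI u.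
Proof. by rewrite /QI PMZ scalerN. Qed.
Lemma QIal x u : QI (alI x u) = alI x (QI u).
Proof.
rewrite /QI /alI !(bNr ba) hPM !PMD !PMN; zmod.
Qed.

Lemma H3I x y u : alI x (alI y u) - alI y (alI x u) = alI (nij x y) u + QI (alI (br x y) u).
Proof.
rewrite /alI /QI /nij.
rewrite !(bDr ba) !(bNr ba) !hPM -(hP x y) /nij_bracket.
rewrite !(bDl ba) !(bNl ba) !rep !PMD !PMN ?PMD ?PMN.
zmod.
Qed.

Lemma add0s (V : zmodType) (a b : V) : a = 0 -> b = 0 -> a + b = 0.
Proof. by move=> -> ->; rewrite addr0. Qed.
Lemma neg0s (V : zmodType) (a : V) : a = 0 -> - a = 0.
Proof. by move=> ->; rewrite oppr0. Qed.
Lemma zcombS (V : zmodType) (a l : V) : a = 0 -> l = a -> l = 0.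
Proof. by move=> -> ->. Qed.
Arguments add0s {V a b}.
Arguments neg0s {V a}.
Arguments zcombS {V a l}.

Lemma P0 : P 0 = 0. Proof. exact: linear0. Qed.
Lemma Pz a : a = 0 -> P a = 0. Proof. by move=> ->; exact: P0. Qed.
Arguments Pz {a}.

Lemma JO a b c : br (br a b) c + br (br b c) a + br (br c a) b = 0.
Proof.
have := jac c a b; rewrite (brN (br a b) c) (brN (br b c) a) (brN (br c a) b).
by move=> h; rewrite -[LHS]opprK -[RHS]oppr0 -h; zmod.
Qed.

Lemma nijN x y : nij y x = - nij x y.
Proof. by rewrite /nij /nij_bracket (brN x (P y)) (brN (P x) y) (brN x y) PN; zmod. Qed.
Lemma nijNl a b : nij (- a) b = - nij a b.
Proof. by rewrite /nij /nij_bracket PN (bNl bb) (bNl bb) (bNl bb) PN; zmod. Qed.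

Lemma ex x y z : nij (nij x y) z = br (br (P x) (P y)) z + br (br (P x) y) (P z)
  + br (br x (P y)) (P z) - P (br (br x y) (P z)) + P (P (br (br x y) z))
  - P (br (br (P x) y) z) - P (br (br x (P y)) z).
Proof.
rewrite {1}/nij /nij_bracket -(hP x y) /nij /nij_bracket.
rewrite !(bDl bb) !(bNl bb) (hP (br x y) z) /nij_bracket.
rewrite !PD !PN ?PD ?PN; zmod.
Qed.

Lemma JacN x y z : nij (nij x y) z + nij (nij y z) x + nij (nij z x) y = 0.
Proof.
rewrite !ex.
have H := add0s (add0s (add0s (add0s (add0s (add0s (JO (P x) (P y) z) (JO (P y) (P z) x))
  (JO (P z) (P x) y)) (neg0s (Pz (JO (P x) y z)))) (neg0s (Pz (JO (P y) z x))))
  (neg0s (Pz (JO (P z) x y)))) (Pz (Pz (JO x y z))).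
refine (zcombS H _).
rewrite !PD; zmod.
Qed.

Lemma J11I x y z : nij y (nij x z) - nij x (nij y z) + nij (nij x y) z = 0.
Proof.
rewrite (nijN (nij x z) y) (nijN z x) nijNl opprK (nijN (nij y z) x) opprK.
refine (zcombS (JacN z x y) _); zmod.
Qed.

Lemma J22I x y z : br y (br x z) - br x (br y z) + br (br x y) z = 0.
Proof.
rewrite (brN z x) (bNr bb) (brN z (br x y)).
by refine (zcombS (neg0s (jac x y z)) _); zmod.
Qed.

Lemma J12I x y z : br y (nij x z) + nij y (br x z) - br x (nij y z) - nij x (br y z)
   + br (nij x y) z + nij (br x y) z = 0.
Proof.
have h1 := jac (P x) y z; rewrite (brN (P x) z) (bNr bb) (brN (br (P x) y) z) in h1.
have h2 := jac x (P y) z; rewrite (brN x z) (bNr bb) (brN (br x (P y)) z) in h2.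
have h3 := jac x y (P z); rewrite (brN x (P z)) (bNr bb) (brN (br x y) (P z)) in h3.
have h4 := jac x y z; rewrite (brN x z) (bNr bb) (brN (br x y) z) in h4.
have h4' := Pz h4; rewrite !PD !PN in h4'.
have H := add0s (add0s (add0s (neg0s h1) (neg0s h2)) (neg0s h3)) h4'.
refine (zcombS H _).
rewrite /nij /nij_bracket !(bDr bb) !(bNr bb) !(bDl bb) !(bNl bb) ?PD ?PN; zmod.
Qed.

Definition toL m (G : ('I_m -> g) -> M) (s : seq g) : M :=
  if size s == m then G (fun k => nth 0 s k) else 0.
Arguments toL {m}.

Lemma toL_add n (f : ('I_n -> g) -> M) : multilinear f -> addF (toL f).
Proof.
move=> hml t j u v hj; rewrite /toL !size_set_nth (maxn_idPr hj).
case: eqP => hs; last by rewrite addr0.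
have hjn : (j < n)%N by rewrite -hs.
have key : forall z, (fun k : 'I_n => nth 0 (set_nth 0 t j z) k) =
    upd (fun k : 'I_n => nth 0 t k) (Ordinal hjn) z.
  move=> z; apply: functional_extensionality => k; rewrite /upd nth_set_nth /=.
  by rewrite -val_eqE.
by rewrite !key; exact: (fD hml).
Qed.

Lemma toL_AS n (f : ('I_n -> g) -> M) : multilinear f -> alternating f -> AS (toL f).
Proof.
move=> hml halt r u v w; rewrite /toL !size_cat /=.
case: eqP => hs; last by rewrite oppr0.
have hp0 : (size r < n)%N by lia.
have hp1 : ((size r).+1 < n)%N by lia.
pose i0 := Ordinal hp0; pose i1 := Ordinal hp1.
have hne : i0 != i1 by rewrite -val_eqE /= ltn_eqF.
pose b0 := fun k : 'I_n => nth 0 (r ++ u :: v :: w) k.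
have nb0 : forall a b : g, nth 0 (r ++ a :: b :: w) (size r) = a.
  by move=> a b; rewrite nth_cat ltnn subnn.
have nb1 : forall a b : g, nth 0 (r ++ a :: b :: w) (size r).+1 = b.
  by move=> a b; rewrite nth_cat (ltnNge (size r).+1) leqnSn /= subSnn.
have e1 : b0 = upd (upd b0 i0 u) i1 v.
  apply: functional_extensionality => k; rewrite /upd /=.
  case: (k =P i1) => [->|h1]; first by rewrite /b0 /= nb1.
  by case: (k =P i0) => [->|h0] //; rewrite /b0 /= nb0.
have e2 : (fun k : 'I_n => nth 0 (r ++ v :: u :: w) k) = upd (upd b0 i0 v) i1 u.
  apply: functional_extensionality => k; rewrite /upd /=.
  case: (k =P i1) => [->|h1]; first by rewrite /= nb1.
  case: (k =P i0) => [->|h0]; first by rewrite /= nb0.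
  have hk0 : (k : nat) != size r by apply/eqP => hk; apply: h0; apply: val_inj.
  have hk1 : (k : nat) != (size r).+1 by apply/eqP => hk; apply: h1; apply: val_inj.
  rewrite /b0 !nth_cat; case: ltnP => hk //.
  have e : ((k : nat) - size r = ((k : nat) - size r - 2).+2)%N.
    move: hk0 hk1 hk => /eqP hk0 /eqP hk1 hk; lia.
  by rewrite e.
have -> : (fun k : 'I_n => nth 0 (r ++ u :: v :: w) k) = b0 by [].
rewrite e2 {1}e1.
exact: (f_swap hml halt _ _ _ _ _ hne).
Qed.

Lemma PMsum I r (Pr : pred I) (F : I -> M) :
  PM (\sum_(i <- r | Pr i) F i) = \sum_(i <- r | Pr i) PM (F i).
Proof. exact: (big_morph PM PMD (linear0 PM)). Qed.

Lemma C1 m (G : ('I_m -> g) -> M) (a : 'I_m.+1 -> g) :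
  njo_diff br act P PM G a = E alI QI nij br (toL G) (mkseq (fun k => a (inord k)) m.+1).
Proof.
pose s := mkseq (fun k => a (inord k)) m.+1.
have ss : size s = m.+1 by rewrite size_mkseq.
have ns : forall k, (k < m.+1)%N -> nth 0 s k = a (inord k).
  by move=> k hk; rewrite nth_mkseq.
have nsi : forall i : 'I_m.+1, nth 0 s i = a i.
  by move=> i; rewrite ns // inord_val.
have hA : forall i : 'I_m.+1, toL G (remi i s) = G (skip1 a i).
  move=> i; rewrite /toL size_remi ss //= eqxx; congr G.
  apply: functional_extensionality => k; rewrite nth_remi ?ss // ns; last exact: bump_lt.
  rewrite /skip1; congr a; apply: val_inj; rewrite /= inordK //; exact: bump_lt.
have hB : forall (bt : g -> g -> g) (i j : 'I_m.+1), (i < j)%N ->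
    toL G (bt (a i) (a j) :: remi i (remi j s)) = G (ce_arg2 bt a i j).
  move=> bt i j hij.
  have hj : (j < size s)%N by rewrite ss.
  have hi : (i < size (remi j s))%N by rewrite size_remi // ss /=; lia.
  rewrite /toL /= size_remi // size_remi // ss /=.
  have -> : (m.-1.+1 == m) = true by apply/eqP; lia.
  congr G; apply: functional_extensionality => k; rewrite /ce_arg2.
  case: k => [[|k] hk] //=.
  rewrite nth_remi // nth_remi // -remidx_bump // ns //.
  rewrite /remidx; case: ifP => _; [|case: ifP => _]; lia.
rewrite /njo_diff /ce_diff /E ss !big_mkord.
have e1 : \sum_(i < m.+1) (-1) ^+ i *: alI (nth 0 s i) (toL G (remi i s)) =
  \sum_(i < m.+1) (-1) ^+ i *: act (P (a i)) (G (skip1 a i)) -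
  PM (\sum_(i < m.+1) (-1) ^+ i *: act (a i) (G (skip1 a i))).
  rewrite PMsum -sumrB; apply: eq_bigr => i _; rewrite nsi hA /alI scalerBr PMZ //.
have e2 : \sum_(i < m.+1) \sum_(0 <= j < m.+1 | (i < j)%N) (-1) ^+ (i + j) *:
    (toL G (nij (nth 0 s i) (nth 0 s j) :: remi i (remi j s)) +
     QI (toL G (br (nth 0 s i) (nth 0 s j) :: remi i (remi j s)))) =
  \sum_(i < m.+1) \sum_(j < m.+1 | (i < j)%N) (-1) ^+ (i + j) *: G (ce_arg2 (nij_bracket P br) a i j) -
  PM (\sum_(i < m.+1) \sum_(j < m.+1 | (i < j)%N) (-1) ^+ (i + j) *: G (ce_arg2 br a i j)).
  rewrite PMsum -sumrB; apply: eq_bigr => i _; rewrite PMsum -sumrB big_mkord.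
  apply: eq_bigr => j hij; rewrite !nsi !hB // /QI scalerDr scalerN PMZ.
  by [].
rewrite -/s e1 e2 PMD; zmod.
Qed.

Ltac abs_hyps := first [exact: alID | exact: alIZ | exact: QID | exact: QIZ | exact: QIal
  | exact: H3I | exact: J11I | exact: J22I | exact: J12I | exact: nijN | exact: brN].

Lemma mainI n (f : ('I_n -> g) -> M) : multilinear f -> alternating f ->
  forall a : 'I_n.+2 -> g, njo_diff br act P PM (njo_diff br act P PM f) a = 0.
Proof.
move=> hml halt a.
have hF := @toL_add n f hml; have hA := @toL_AS n f hml halt.
have e : toL (njo_diff br act P PM f) = E alI QI nij br (toL f).
  apply: functional_extensionality => t; rewrite /toL; case: eqP => hs.
    rewrite C1; congr E.
    apply: (@eq_from_nth _ 0); first by rewrite size_mkseq hs.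
    move=> k; rewrite size_mkseq => hk; rewrite nth_mkseq // inordK //.
  symmetry; apply: E_vanish; try abs_hyps.
  by move=> u hu; rewrite /toL; case: eqP => // hun; exfalso; apply: hs; rewrite -hu hun.
rewrite C1 e; apply: EE0; try abs_hyps; [exact: hA | exact: hF].
Qed.
End Inst.

Theorem lemma6p2 (K : fieldType) (charK0 : [pchar K] =i pred0)
  (g M : lmodType K) (br : g -> g -> g) (act : g -> M -> M)
  (P : {linear g -> g}) (PM : {linear M -> M}) :
  is_lie_bracket br -> is_lie_rep br act ->
  is_nijenhuis_op br P -> is_nijenhuis_rep P act PM ->
  forall (n : nat) (f : ('I_n -> g) -> M),
    multilinear f -> alternating f ->
    forall a : 'I_n.+2 -> g,
      njo_diff br act P PM (njo_diff br act P PM f) a = 0.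
Proof.
move=> hbr hact hP hPM n f hml halt a.
by eapply mainI; eassumption.
Qed.
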